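(* Let $\Sigma$ be a finite non-empty alphabet, $\Sigma^*$ the set of finite strings over $\Sigma$, $V=\mathbb{R}^d$ with a fixed norm $|\cdot|_V$, $W=\mathbb{R}^N$ with a fixed norm $|\cdot|_W$, and $\lambda>0$. There is a constant $c(\lambda)>0$ depending only on $\lambda$ such that for all maps $\mathbf{h},\mathbf{g}\colon\Sigma^*\to V$, $$d_{\mathcal{V}(V,\Delta)}(\mathbf{h},\mathbf{g})\le c(\lambda)\, d^{\mathcal{H}}_{\mathrm{Aff}(V)}(\mathbf{h},\mathbf{g}).$$
   Context: $\mathrm{Aff}(V)$ is the group of invertible affine maps of $V$; $\mathrm{Aff}(V,W)$ is the set of affine maps $V\to W$, i.e. $\mathbf{v}\mapsto\mathbf{A}\mathbf{v}+\mathbf{b}$ with $\mathbf{A}$ linear $V\to W$, $\mathbf{b}\in W$. For $\mathbf{f}\colon\Sigma^*\to V$, $\|\mathbf{f}\|_\infty=\sup_{\mathbf{y}}|\mathbf{f}(\mathbf{y})|_V$, and $d_\infty(\mathbf{f},\mathbf{f}')=\|\mathbf{f}-\mathbf{f}'\|_\infty$ (values in $[0,\infty]$); analogously $d_{\infty,W}$ for maps into $W$ and $d_{\infty,\Delta}(p,q)=\sup_{\mathbf{y}}|p(\mathbf{y})-q(\mathbf{y})|_W$ for maps $p,q\colon\Sigma^*\to\Delta^{N-1}$, the probability simplex in $\mathbb{R}^N$. For a (hemi-)metric $d$ and non-empty sets $E,E'$, $d(x,E)=\inf_{y\in E}d(x,y)$ and the Hausdorff–Hoare map is $d^{\mathcal{H}}(E,E')=\sup_{x\in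 E}d(x,E')$. Define $d^{\mathcal{H}}_{\mathrm{Aff}(V)}(\mathbf{h},\mathbf{g})=d_\infty^{\mathcal{H}}(\{\psi\circ\mathbf{h}:\psi\in\mathrm{Aff}(V)\},\{\psi\circ\mathbf{g}:\psi\in\mathrm{Aff}(V)\})$. $\mathrm{softmax}_\lambda\colon\mathbb{R}^N\to\Delta^{N-1}$ is the softmax with inverse temperature $\lambda$, $\mathrm{softmax}_\lambda(\mathbf{x})_i=e^{\lambda x_i}/\sum_j e^{\lambda x_j}$. Let $\mathcal{V}_N(\mathbf{h})=\{\mathrm{softmax}_\lambda\circ\psi\circ\mathbf{h}:\psi\in\mathrm{Aff}(V,W)\}$ and $d_{\mathcal{V}(V,\Delta)}(\mathbf{h},\mathbf{g})=d^{\mathcal{H}}_{\infty,\Delta}(\mathcal{V}_N(\mathbf{h}),\mathcal{V}_N(\mathbf{g}))$. *)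

(* Defs.v *)
From HB Require Import structures.
From mathcomp Require Import all_boot all_order all_algebra.
From mathcomp Require Import all_classical all_reals all_analysis.
Set Implicit Arguments. Unset Strict Implicit. Unset Printing Implicit Defensive.
Import Order.TTheory GRing.Theory Num.Theory.
Local Open Scope classical_set_scope.
Local Open Scope ring_scope.

Section Defs.
Variable R : realType.

Definition is_norm (n : nat) (nrm : 'rV[R]_n -> R) : Prop :=
  [/\ forall x, 0 <= nrm x,
      forall x, nrm x = 0 -> x = 0,
      forall (a : R) x, nrm (a *: x) = `|a| * nrm x
    & forall x y, nrm (x + y) <= nrm x + nrm y].

Definition softmax (lam : R) (N : nat) (x : 'rV[R]_N) : 'rV[R]_N :=
  \row_i (expR (lam * x 0 i) / \sum_(j < N) expR (lam * x 0 j)).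

Definition d_inf (S : Type) (n : nat) (nrm : 'rV[R]_n -> R)
    (f f' : S -> 'rV[R]_n) : \bar R :=
  ereal_sup [set (nrm (f y - f' y))%:E | y in [set: S]].

Definition dist_to (T : Type) (dist : T -> T -> \bar R) (x : T) (E : set T)
  : \bar R := ereal_inf [set dist x y | y in E].

Definition hausdorff_hoare (T : Type) (dist : T -> T -> \bar R)
    (E E' : set T) : \bar R :=
  ereal_sup [set dist_to dist x E' | x in E].

Definition aff_orbit (S : Type) (d : nat) (h : S -> 'rV[R]_d)
  : set (S -> 'rV[R]_d) :=
  [set f | exists (A : 'M[R]_d) (b : 'rV[R]_d),
           A \in unitmx /\ f = (fun y => h y *m A + b)].

Definition dH_Aff (S : Type) (d : nat) (nrmV : 'rV[R]_d -> R)
    (h g : S -> 'rV[R]_d) : \bar R :=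
  hausdorff_hoare (d_inf nrmV) (aff_orbit h) (aff_orbit g).

Definition softmax_orbit (lam : R) (S : Type) (d N : nat) (h : S -> 'rV[R]_d)
  : set (S -> 'rV[R]_N) :=
  [set f | exists (A : 'M[R]_(d, N)) (b : 'rV[R]_N),
           f = (fun y => softmax lam (h y *m A + b))].

Definition d_V_Delta (lam : R) (S : Type) (d N : nat) (nrmW : 'rV[R]_N -> R)
    (h g : S -> 'rV[R]_d) : \bar R :=
  hausdorff_hoare (d_inf nrmW) (@softmax_orbit lam S d N h) (@softmax_orbit lam S d N g).

End Defs.

(* Main.v *)
Require Import Defs.
From HB Require Import structures.
From mathcomp Require Import all_boot all_order all_algebra.
From mathcomp Require Import all_classical all_reals all_analysis.
From mathcomp Require Import lra ring.
Import Order.TTheory GRing.Theory Num.Theory.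
Local Open Scope classical_set_scope.
Local Open Scope ring_scope.
Section H.
Set Implicit Arguments. Unset Strict Implicit.
Variable R : realType.

Lemma mxn_eq n (x : 'rV[R]_n) : `|x| = \big[Num.max/0]_ij `|x ij.1 ij.2|.
Proof. by rewrite -mx_normrE. Qed.

Lemma mxn_ge n (x : 'rV[R]_n) i : `|x 0 i| <= `|x|.
Proof.
rewrite mxn_eq.
exact: (le_bigmax _ (fun ij : 'I_1 * 'I_n => `|x ij.1 ij.2|) (0, i)).
Qed.

Lemma mxn_le n (x : 'rV[R]_n) r : 0 <= r -> (forall i, `|x 0 i| <= r) -> `|x| <= r.
Proof.
move=> r0 H; rewrite mxn_eq.
apply: bigmax_le => // -[i j] _ /=; by rewrite (ord1 i).
Qed.

Lemma nrm_ub n (nrm : 'rV[R]_n -> R) : is_norm nrm ->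
  exists2 K, 0 < K & forall x, nrm x <= K * `|x|.
Proof.
case=> n0 n1 nZ nD.
have nsum : forall (I : seq 'I_n) (F : 'I_n -> 'rV[R]_n), nrm (\sum_(i <- I) F i) <= \sum_(i <- I) nrm (F i).
  move=> I F; elim: I => [|a I IH]; first by rewrite !big_nil -(scale0r (0 : 'rV[R]_n)) nZ normr0 mul0r.
  by rewrite !big_cons (le_trans (nD _ _)) // lerD2l.
exists (1 + \sum_i nrm (delta_mx 0 i)).
  by rewrite ltr_wpDr // sumr_ge0.
move=> x.
have -> : x = \sum_i x 0 i *: delta_mx 0 i.
  by rewrite [LHS]row_sum_delta.
apply: (le_trans (nsum _ _)).
rewrite mulrDl mul1r; apply: ler_wpDl; first exact: normr_ge0.
rewrite mulr_suml; apply: ler_sum => i _; rewrite nZ mulrC ler_wpM2l //.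
by rewrite -row_sum_delta; exact: mxn_ge.
Qed.
End H.
Section H2.
Set Implicit Arguments. Unset Strict Implicit.
Variable R : realType.

Lemma nrmN n (nrm : 'rV[R]_n -> R) : is_norm nrm -> forall x, nrm (- x) = nrm x.
Proof. by case=> _ _ nZ _ x; rewrite -scaleN1r nZ normrN normr1 mul1r. Qed.

Lemma nrm_cont n (nrm : 'rV[R]_n -> R) : is_norm nrm -> continuous (nrm : 'rV[R^o]_n -> R^o).
Proof.
move=> Hn; have [K K0 HK] := nrm_ub Hn.
have HN := nrmN Hn; case: Hn => n0 n1 nZ nD.
move=> x.
have FF : Filter (nbhs x) by exact: alias_nbhs_filter.
apply/(@cvgrPdist_le _ _ _ _ FF) => /= e e0.
have hh := @cvgr_dist_lt _ _ _ _ FF (@id 'rV[R^o]_n) x (@cvg_id _ (nbhs x)) (e/K) (divr_gt0 e0 K0).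
apply: (@filterS _ _ FF _ _ _ hh) => y /= hy.
have h1 : nrm (x - y) <= e.
  apply: (le_trans (HK _)).
  by rewrite -ler_pdivlMl // mulrC ltW.
have h2 := nD (y - x) x; rewrite subrK -(HN (y - x)) opprB in h2.
have h3 := nD (x - y) y; rewrite subrK in h3.
rewrite ler_norml; apply/andP; split; lra.
Qed.

Lemma nrm_lb n (nrm : 'rV[R]_n -> R) : is_norm nrm ->
  exists2 k, 0 < k & forall x, k * `|x| <= nrm x.
Proof.
move=> Hn; have cont := nrm_cont Hn.
case: Hn => n0 n1 nZ nD.
pose S := [set x : 'rV[R^o]_n | `|x| = 1].
have inS : forall x : 'rV[R]_n, x != 0 -> S (`|x|^-1 *: x).
  move=> x x0; rewrite /S /= normrZ normrV ?unitfE ?normr_eq0 // normr_id mulVf //.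
  by rewrite normr_eq0.
case: (pselect (S !=set0)) => [S0|S0]; last first.
  exists 1 => // x; case: (eqVneq x 0) => [->|x0]; first by rewrite normr0 mulr0.
  by exfalso; apply: S0; exists (`|x|^-1 *: x); apply: inS.
have cS : compact S.
  apply: bounded_closed_compact.
    exists 1; split => // M M1 x /= ->; exact: ltW.
  have -> : S = (@Num.norm _ 'rV[R^o]_n) @^-1` [set z | z = 1] by [].
  have := (continuous_closedP (fun x : 'rV[R^o]_n => (`|x| : R^o))).1 (@norm_continuous _ _) _ (@closed_eq R 1).
  by [].
have [c cS' cmin] := EVT_min_rV S0 cS (continuous_subspaceT cont).
have c1 : `|c| = 1 by move: cS'; rewrite inE.
have c0 : c != 0 by apply/eqP => c0; move: c1; rewrite c0 normr0 => /eqP; rewrite eq_sym oner_eq0.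
have k0 : 0 < nrm c.
  rewrite lt_neqAle n0 andbT eq_sym; apply/eqP => /n1 /eqP; exact/negP.
exists (nrm c) => // x; case: (eqVneq x 0) => [->|x0].
  by rewrite normr0 mulr0 n0.
have := cmin _ (mem_set (inS _ x0)); rewrite nZ normrV ?unitfE ?normr_eq0 // normr_id.
by rewrite ler_pdivlMl ?normr_gt0 // mulrC.
Qed.
End H2.
Section H3.
Set Implicit Arguments. Unset Strict Implicit.
Variable R : realType.

Lemma mulmx_bound d N (A : 'M[R]_(d, N)) :
  exists2 C, 0 < C & forall x : 'rV[R]_d, `|x *m A| <= C * `|x|.
Proof.
exists (1 + \sum_j \sum_i `|A i j|); first by rewrite ltr_wpDr // sumr_ge0 // => j _; rewrite sumr_ge0.
move=> x; apply: mxn_le; first by rewrite mulr_ge0 // ltW // ltr_wpDr // sumr_ge0 // => j _; rewrite sumr_ge0.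
move=> j; rewrite mxE.
apply: (le_trans (ler_norm_sum _ _ _)).
apply: (@le_trans _ _ (\sum_i `|x| * `|A i j|)).
  apply: ler_sum => i _; rewrite normrM ler_wpM2r //; exact: mxn_ge.
rewrite -mulr_sumr mulrC ler_wpM2r // ler_wpDl //.
rewrite (bigD1 j) //= ler_wpDr // sumr_ge0 // => k _; exact: sumr_ge0.
Qed.

Lemma ratio_le (a b SA SB t : R) : 0 <= a -> 0 < SA -> 0 < SB -> 0 <= b -> b <= SB -> 1 <= t ->
  a <= t * b -> SB <= t * SA -> a / SA - b / SB <= t * t - 1.
Proof.
move=> a0 SA0 SB0 b0 bSB t1 ab SBA.
set p := a / SA; set q := b / SB.
have pa : a = p * SA by rewrite /p mulfVK // gt_eqF.
have qb : b = q * SB by rewrite /q mulfVK // gt_eqF.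
have q1 : q <= 1 by rewrite /q ler_pdivrMr // mul1r.
have q0 : 0 <= q by rewrite /q divr_ge0 // ltW.
have h : a * SB <= (t * b) * (t * SA) by apply: ler_pM => //; exact: ltW.
rewrite pa qb in h.
have h2 : p <= t * t * q.
  have hh : 0 <= (t * t * q - p) * (SA * SB) by nra.
  rewrite pmulr_lge0 ?mulr_gt0 // in hh; lra.
have h3 : 0 <= (t * t - 1) * (1 - q).
  apply: mulr_ge0; last by lra.
  rewrite subr_ge0; have := ler_pM (@ler01 R) (@ler01 R) t1 t1; by rewrite mulr1.
lra.
Qed.

Lemma softmax_uc (lam : R) N : 0 < lam -> forall e, 0 < e ->
  exists2 del, 0 < del & forall u v : 'rV[R]_N, `|u - v| <= del ->
    `|softmax lam u - softmax lam v| <= e.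
Proof.
move=> l0 e e0.
exists (ln (1 + e) / (2 * lam)); first by rewrite divr_gt0 ?mulr_gt0 // ln_gt0 // ltrDl.
move=> u v huv.
set t := expR (lam * (ln (1 + e) / (2 * lam))).
have tt : t * t = 1 + e.
  rewrite /t -expRD.
  have -> : lam * (ln (1 + e) / (2 * lam)) + lam * (ln (1 + e) / (2 * lam)) = ln (1 + e).
    by field; rewrite gt_eqF.
  by apply/eqP; rewrite lnK_eq addr_gt0.
have t1 : 1 <= t.
  rewrite /t; apply: (@le_trans _ _ (expR 0)); first by rewrite expR0.
  rewrite ler_expR; apply: mulr_ge0; first exact: ltW.
  apply: divr_ge0; last by apply: mulr_ge0 => //; exact: ltW.
  by apply: ln_ge0; lra.
have key : forall (w z : 'rV[R]_N), `|w - z| <= ln (1 + e) / (2 * lam) ->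
   forall j, expR (lam * w 0 j) <= t * expR (lam * z 0 j).
  move=> w z hwz j; rewrite /t -expRD ler_expR -mulrDr ler_pM2l //.
  have := le_trans (mxn_ge (w - z) j) hwz; rewrite !mxE ler_norml => /andP[_]; lra.
have huv' : `|v - u| <= ln (1 + e) / (2 * lam) by rewrite -normrN opprB.
have sum_le : forall (w z : 'rV[R]_N), `|w - z| <= ln (1 + e) / (2 * lam) ->
   \sum_j expR (lam * w 0 j) <= t * \sum_j expR (lam * z 0 j).
  move=> w z hwz; rewrite mulr_sumr; apply: ler_sum => j _; exact: key.
apply: mxn_le; first exact: ltW.
move=> j; rewrite !mxE.
have Spos : forall w : 'rV[R]_N, 0 < \sum_k expR (lam * w 0 k).
  move=> w; rewrite (bigD1 j) //= ltr_wpDr // ?expR_gt0 // sumr_ge0 // => k _; exact/ltW/expR_gt0.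
have Sge : forall w : 'rV[R]_N, expR (lam * w 0 j) <= \sum_k expR (lam * w 0 k).
  move=> w; rewrite (bigD1 j) //= ler_wpDr // sumr_ge0 // => k _; exact/ltW/expR_gt0.
have te : e = t * t - 1 by rewrite tt; lra.
rewrite ler_norml; apply/andP; split.
  rewrite lerNl opprB te.
  apply: ratio_le; [exact: ltW (expR_gt0 _)|exact: Spos|exact: Spos|exact: ltW (expR_gt0 _)|exact: Sge|exact: t1|exact: key|exact: sum_le].
rewrite te.
apply: ratio_le; [exact: ltW (expR_gt0 _)|exact: Spos|exact: Spos|exact: ltW (expR_gt0 _)|exact: Sge|exact: t1|exact: key|exact: sum_le].
Qed.
End H3.
Section H4.
Set Implicit Arguments. Unset Strict Implicit.
Variable R : realType.

Lemma d_inf_le (S : Type) n (nrm : 'rV[R]_n -> R) (f f' : S -> 'rV[R]_n) r :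
  (forall y, nrm (f y - f' y) <= r) -> (d_inf nrm f f' <= r%:E)%E.
Proof. move=> H; apply: ge_ereal_sup => _ [y _ <-]; rewrite lee_fin; exact: H. Qed.

Lemma d_inf_ge (S : Type) n (nrm : 'rV[R]_n -> R) (f f' : S -> 'rV[R]_n) y :
  ((nrm (f y - f' y))%:E <= d_inf nrm f f')%E.
Proof. by apply: ereal_sup_ubound; exists y. Qed.

Lemma scalar_unit d (s : R) : s != 0 -> s%:M \in @unitmx R d.
Proof. by move=> s0; rewrite unitmxE det_scalar unitrX // unitfE. Qed.

End H4.

Theorem mainTheorem2 (R : realType) (lam : R) (hlam : 0 < lam) :
  exists c : R, 0 < c /\
  forall (Sigma : finType) (d N : nat)
         (nrmV : 'rV[R]_d -> R) (nrmW : 'rV[R]_N -> R),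
    (0 < #|Sigma|)%N -> (0 < N)%N ->
    is_norm nrmV -> is_norm nrmW ->
    forall h g : seq Sigma -> 'rV[R]_d,
      (d_V_Delta lam nrmW h g <= c%:E * dH_Aff nrmV h g)%E.
Proof.
exists 1; split => //.
move=> Sigma d N nrmV nrmW _ N0 HV HW h g.
rewrite mul1e.
set D := dH_Aff nrmV h g.
have HV' := HV; case: HV' => nV0 nV1 nVZ nVD.
have D0 : (0 <= D)%E.
  apply: (@le_trans _ _ (dist_to (d_inf nrmV) h (aff_orbit g))).
    apply: le_ereal_inf_tmp => _ [G _ <-].
    apply: le_trans (d_inf_ge _ _ _ [::]); rewrite lee_fin; exact: nV0.
  apply: ereal_sup_ubound; exists h => //.
  exists 1%:M, 0; split; first exact: unitmx1.
  by apply: funext => y; rewrite mulmx1 addr0.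
case: (eqVneq D +oo%E) => [->|Dfin]; first by rewrite leey.
have Dr : D = (fine D)%:E.
  by rewrite fineK // fin_numE Dfin andbT; apply: contraTneq D0 => ->.
set M := fine D + 1.
have M0 : 0 < M by rewrite /M ltr_wpDl // -lee_fin -Dr.
have approx : forall eta, 0 < eta -> exists A' b',
    forall y, nrmV (h y - (g y *m A' + b')) <= eta.
  move=> eta eta0.
  set s := M / eta.
  have s0 : 0 < s by rewrite divr_gt0.
  have hs : (dist_to (d_inf nrmV) (fun y => (h y *m (s%:M) + 0)%R) (aff_orbit g) < M%:E)%E.
    apply: (@le_lt_trans _ _ D); last by rewrite Dr lte_fin /M ltrDl.
    apply: ereal_sup_ubound; exists (fun y => (h y *m (s%:M) + 0)%R) => //.
    exists s%:M, 0; split => //. by apply: scalar_unit; rewrite gt_eqF.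
  have [_ [G [A' [b' [_ ->]]] <-] lt] := ereal_inf_lt hs.
  exists (s^-1 *: A'), (s^-1 *: b') => y.
  have := le_lt_trans (d_inf_ge _ _ _ y) lt; rewrite lte_fin => hy.
  have e : h y - (g y *m (s^-1 *: A') + s^-1 *: b') =
      s^-1 *: (h y *m s%:M + 0 - (g y *m A' + b')).
    rewrite mul_mx_scalar addr0 scalerBr scalerA mulVf ?gt_eqF // scale1r.
    by rewrite scalerDr scalemxAr.
  rewrite e nVZ ger0_norm; last by rewrite invr_ge0 ltW.
  rewrite ler_pdivrMl // /s mulrAC -mulrA mulfV ?gt_eqF // mulr1.
  exact: ltW.
apply: le_trans D0.
apply: ge_ereal_sup => _ [F [A [b ->]] <-].
apply/lee_addgt0Pr => e e0; rewrite add0e.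
have [KW KW0 HKW] := nrm_ub HW.
have [kV kV0 HkV] := nrm_lb HV.
have [C C0 HC] := mulmx_bound A.
have [del del0 Hdel] := softmax_uc N hlam (divr_gt0 e0 KW0).
have [A' [b' Hap]] := approx (kV * del / C) (divr_gt0 (mulr_gt0 kV0 del0) C0).
apply: ge_ereal_inf.
eexists.
  exists (fun y => softmax lam (g y *m (A' *m A) + (b' *m A + b))%R); last reflexivity.
  by exists (A' *m A), (b' *m A + b).
apply: d_inf_le => y.
set z := h y - (g y *m A' + b').
have ez : (h y *m A + b) - (g y *m (A' *m A) + (b' *m A + b)) = z *m A.
  rewrite /z mulmxBl mulmxDl mulmxA.
  set X := h y *m A; set Y := g y *m A' *m A; set Z := b' *m A.
  by rewrite [Z + b]addrC addrA opprD opprD [- Y - b]addrC !addrA addrK opprD addrA.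
have hz : `|z| <= del / C.
  have := HkV z; have := Hap y; rewrite -/z => h1 h2.
  rewrite ler_pdivlMr // -(ler_pM2l kV0) mulrA -ler_pdivlMr //.
  exact: le_trans h2 h1.
have huv : `|(h y *m A + b) - (g y *m (A' *m A) + (b' *m A + b))| <= del.
  rewrite ez; apply: (le_trans (HC _)).
  by rewrite mulrC -ler_pdivlMr.
apply: (le_trans (HKW _)).
rewrite mulrC -ler_pdivlMr //; exact: Hdel.
Qed.
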